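(* Let $r\in\mathbb Z_+$ be even and $\Gamma=\Gamma_{(r,r)}$. If $E\in(-4,4)\setminus\mathcal C_\Gamma$, then $E\in\operatorname{int}B_j^\Gamma$ for some $j$.
   Context: For $r\ge3$ and $\theta\in\mathbb R$, $\Delta_\theta^r\in\mathbb C^{r\times r}$ is the Hermitian matrix with $1$ on the sub- and superdiagonals, $0$ on the diagonal, entry $e^{-i\theta}$ in position $(1,r)$ and $e^{i\theta}$ in position $(r,1)$, all other entries $0$; $\Delta_\theta^2=\begin{bmatrix}0&1+e^{-i\theta}\\1+e^{i\theta}&0\end{bmatrix}$. $\Gamma=\Gamma_{(r,r)}=([0,r)\times[0,r))\cap\mathbb Z^2$, $\Delta^\Gamma_{\theta,\varphi}=\Delta_\theta^r\otimes I_r+I_r\otimes\Delta_\varphi^r$, with eigenvalues $\lambda_1^\Gamma(\theta,\varphi)\le\cdots\le\lambda_{r^2}^\Gamma(\theta,\varphi)$ counted with multiplicity, and bands $B_j^\Gamma=\{\lambda_j^\Gamma(\theta,\varphi):(\theta,\varphi)\in[0,\pi]^2\}$. $\mathcal C_r=\{2\cos(\pi j/r): j\in\mathbb Z,\ 0\le j\le r\}$ and $\mathcal C_\Gamma=\mathcal C_r+\mathcal C_r=\{a+b:a,b\in\mathcal C_r\}$ (the exceptional energies). *)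

(* Defs.v *)
From Stdlib Require Import Reals Lra Lia Arith List Sorted.
Open Scope R_scope.

Definition C : Type := (R * R)%type.
Definition C0 : C := (0, 0).
Definition C1 : C := (1, 0).
Definition RtoC (x : R) : C := (x, 0).
Definition Cadd (z w : C) : C := (fst z + fst w, snd z + snd w).
Definition Cmul (z w : C) : C :=
  (fst z * fst w - snd z * snd w, fst z * snd w + snd z * fst w).
Definition Cconj (z : C) : C := (fst z, - snd z).
Definition Cexpi (t : R) : C := (cos t, sin t).

Fixpoint Csum (n : nat) (f : nat -> C) : C :=
  match n with
  | O => C0
  | S m => Cadd (Csum m f) (f m)
  end.

(* Matrices of size n are functions nat -> nat -> C, indices 0..n-1 (0-based);
   vectors are functions nat -> C. *)
Definition matvec (n : nat) (M : nat -> nat -> C) (v : nat -> C) (i : nat) : C :=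
  Csum n (fun k => Cmul (M i k) (v k)).
Definition cinner (n : nat) (u v : nat -> C) : C :=
  Csum n (fun k => Cmul (Cconj (u k)) (v k)).

(* Delta_theta^r, 0-based indices: paper position (1,r) is (0,r-1). *)
Definition Delta (r : nat) (theta : R) (i j : nat) : C :=
  if Nat.eqb r 2 then
    (if andb (Nat.eqb i 0) (Nat.eqb j 1) then Cadd C1 (Cexpi (- theta))
     else if andb (Nat.eqb i 1) (Nat.eqb j 0) then Cadd C1 (Cexpi theta)
     else C0)
  else
    (if andb (Nat.eqb i 0) (Nat.eqb j (r - 1)) then Cexpi (- theta)
     else if andb (Nat.eqb i (r - 1)) (Nat.eqb j 0) then Cexpi theta
     else if orb (Nat.eqb (i + 1) j) (Nat.eqb (j + 1) i) then C1
     else C0).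

(* Delta^Gamma_{theta,phi} = Delta_theta^r (x) I_r + I_r (x) Delta_phi^r,
   with Kronecker index (a,b) |-> a*r + b. *)
Definition DeltaGamma (r : nat) (theta phi : R) (p q : nat) : C :=
  let a := (p / r)%nat in let b := (p mod r)%nat in
  let c := (q / r)%nat in let d := (q mod r)%nat in
  Cadd (if Nat.eqb b d then Delta r theta a c else C0)
       (if Nat.eqb a c then Delta r phi b d else C0).

(* l (a list of n reals) is the list of eigenvalues, counted with multiplicity,
   of the (Hermitian) n x n matrix M: there is an orthonormal basis of C^n
   consisting of eigenvectors vs i with eigenvalue nth i l. *)
Definition spectrum (n : nat) (M : nat -> nat -> C) (l : list R) : Prop :=
  length l = n /\
  exists vs : nat -> nat -> C,
    (forall i j, (i < n)%nat -> (j < n)%nat ->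
        cinner n (vs i) (vs j) = (if Nat.eqb i j then C1 else C0)) /\
    (forall i k, (i < n)%nat -> (k < n)%nat ->
        matvec n M (vs i) k = Cmul (RtoC (nth i l 0)) (vs i k)).

(* band r j E : E = lambda_{j+1}^Gamma(theta,phi) for some (theta,phi) in [0,pi]^2
   (j is 0-based: j = 0 is the smallest eigenvalue). *)
Definition band (r j : nat) (E : R) : Prop :=
  exists theta phi, 0 <= theta <= PI /\ 0 <= phi <= PI /\
    exists l, Sorted Rle l /\ spectrum (r * r) (DeltaGamma r theta phi) l /\
              nth j l 0 = E.

Definition in_interior (S : R -> Prop) (x : R) : Prop :=
  exists eps, 0 < eps /\ forall y, Rabs (y - x) < eps -> S y.

Definition in_Cr (r : nat) (x : R) : Prop :=
  exists j : nat, (j <= r)%nat /\ x = 2 * cos (PI * INR j / INR r).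

Definition in_CGamma (r : nat) (x : R) : Prop :=
  exists a b, in_Cr r a /\ in_Cr r b /\ x = a + b.

(* Main.v *)
Require Import Defs.
From Stdlib Require Import Reals Lra Lia Arith List Sorted Permutation Orders Mergesort.
Import Defs.
Open Scope R_scope.

Ltac Cdestr := repeat match goal with z : Defs.C |- _ => destruct z end.
Ltac Csolve := Cdestr; unfold Cadd, Cmul, Cconj, RtoC, C0, C1 in *; simpl; f_equal; ring.

Lemma Cadd_comm z w : Cadd z w = Cadd w z. Proof. Csolve. Qed.
Lemma Cadd_assoc z w v : Cadd (Cadd z w) v = Cadd z (Cadd w v). Proof. Csolve. Qed.
Lemma Cadd_0_l z : Cadd C0 z = z. Proof. Csolve. Qed.
Lemma Cadd_0_r z : Cadd z C0 = z. Proof. Csolve. Qed.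
Lemma Cmul_comm z w : Cmul z w = Cmul w z. Proof. Csolve. Qed.
Lemma Cmul_assoc z w v : Cmul (Cmul z w) v = Cmul z (Cmul w v). Proof. Csolve. Qed.
Lemma Cmul_0_l z : Cmul C0 z = C0. Proof. Csolve. Qed.
Lemma Cmul_0_r z : Cmul z C0 = C0. Proof. Csolve. Qed.
Lemma Cmul_1_l z : Cmul C1 z = z. Proof. Csolve. Qed.
Lemma Cmul_add_l z w v : Cmul (Cadd z w) v = Cadd (Cmul z v) (Cmul w v). Proof. Csolve. Qed.
Lemma Cmul_add_r z w v : Cmul v (Cadd z w) = Cadd (Cmul v z) (Cmul v w). Proof. Csolve. Qed.
Lemma Cconj_mul z w : Cconj (Cmul z w) = Cmul (Cconj z) (Cconj w). Proof. Csolve. Qed.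

Lemma Cexpi_add a b : Cmul (Cexpi a) (Cexpi b) = Cexpi (a + b).
Proof. unfold Cmul, Cexpi; simpl. rewrite cos_plus, sin_plus. f_equal; ring. Qed.
Lemma Cconj_expi a : Cconj (Cexpi a) = Cexpi (- a).
Proof. unfold Cconj, Cexpi; simpl. rewrite cos_neg, sin_neg. auto. Qed.
Lemma Cexpi_0 : Cexpi 0 = C1.
Proof. unfold Cexpi, C1. rewrite cos_0, sin_0; auto. Qed.
Lemma Cexpi_ext a b : a = b -> Cexpi a = Cexpi b. Proof. intros ->; auto. Qed.
Lemma cos_2PIk k : cos (2 * PI * INR k) = 1.
Proof. rewrite <- (Rplus_0_l (2 * PI * INR k)). replace (0 + 2*PI*INR k) with (0 + 2 * INR k * PI) by ring.
  rewrite cos_period; apply cos_0. Qed.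
Lemma sin_2PIk k : sin (2 * PI * INR k) = 0.
Proof. replace (2*PI*INR k) with (0 + 2 * INR k * PI) by ring.
  rewrite sin_period; apply sin_0. Qed.
Lemma Cexpi_per x k : Cexpi (x + 2 * PI * INR k) = Cexpi x.
Proof. unfold Cexpi. rewrite cos_plus, sin_plus, cos_2PIk, sin_2PIk. f_equal; ring. Qed.
Lemma Cexpi_cos a : Cadd (Cexpi a) (Cexpi (- a)) = RtoC (2 * cos a).
Proof. unfold Cadd, Cexpi, RtoC; simpl. rewrite cos_neg, sin_neg. f_equal; ring. Qed.

Lemma Csum_ext n f g : (forall i, (i < n)%nat -> f i = g i) -> Csum n f = Csum n g.
Proof. induction n; intros H; simpl; auto. rewrite IHn, H; auto. Qed.
Lemma Csum_plus n f g : Csum n (fun i => Cadd (f i) (g i)) = Cadd (Csum n f) (Csum n g).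
Proof. induction n; simpl. Csolve. rewrite IHn. Csolve. Qed.
Lemma Csum_mul_r n f z : Csum n (fun i => Cmul (f i) z) = Cmul (Csum n f) z.
Proof. induction n; simpl. Csolve. rewrite IHn. Csolve. Qed.
Lemma Csum_mul_l n f z : Csum n (fun i => Cmul z (f i)) = Cmul z (Csum n f).
Proof. induction n; simpl. Csolve. rewrite IHn. Csolve. Qed.
Lemma Csum_zero n f : (forall i, (i < n)%nat -> f i = C0) -> Csum n f = C0.
Proof. induction n; intros H; simpl; auto. rewrite IHn, H; auto. Csolve. Qed.
Lemma Csum_app m n f : Csum (m + n) f = Cadd (Csum m f) (Csum n (fun i => f (m + i)%nat)).
Proof. induction n; simpl. rewrite Nat.add_0_r. symmetry; apply Cadd_0_r.
  rewrite Nat.add_succ_r; simpl. rewrite IHn. apply Cadd_assoc. Qed.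
Lemma Csum_delta n c z : (c < n)%nat -> Csum n (fun i => if Nat.eqb i c then z else C0) = z.
Proof. induction n; intros H; [lia|]. simpl. destruct (Nat.eqb_spec n c).
  - subst. rewrite Csum_zero. apply Cadd_0_l. intros i Hi. destruct (Nat.eqb_spec i c); [lia|auto].
  - rewrite IHn by lia. apply Cadd_0_r. Qed.
Lemma Csum_single n c f : (c < n)%nat -> (forall i, (i < n)%nat -> i <> c -> f i = C0) -> Csum n f = f c.
Proof. intros Hc H. rewrite <- (Csum_delta n c (f c)) by auto. apply Csum_ext. intros i Hi.
  destruct (Nat.eqb_spec i c). subst; auto. auto. Qed.
Lemma divmod_eq r a b : (b < r)%nat -> ((a * r + b) / r = a /\ (a * r + b) mod r = b)%nat.
Proof. intros H. split. symmetry; apply Nat.div_unique with b; lia. symmetry; apply Nat.mod_unique with a; lia. Qed.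
Lemma Csum_prod r F : Csum (r * r) F = Csum r (fun a => Csum r (fun b => F (a * r + b)%nat)).
Proof. assert (forall m, Csum (m * r) F = Csum m (fun a => Csum r (fun b => F (a * r + b)%nat))).
  { induction m; simpl; auto. replace (r + m * r)%nat with (m * r + r)%nat by lia.
    rewrite Csum_app, IHm. auto. }
  apply H. Qed.
Lemma Csum_prod2 n f g : Csum n (fun a => Csum n (fun b => Cmul (f a) (g b))) = Cmul (Csum n f) (Csum n g).
Proof. rewrite <- Csum_mul_r. apply Csum_ext; intros. apply Csum_mul_l. Qed.

Definition alpha (r : nat) (th : R) (k : nat) : R := (th + 2 * PI * INR k) / INR r.
Definition ee (r : nat) (th : R) (k a : nat) : Defs.C := Cexpi (INR a * alpha r th k).
Definition mu (r : nat) (th : R) (k : nat) : R := 2 * cos (alpha r th k).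

Lemma mul_cos a x : Cmul (RtoC (2 * cos a)) (Cexpi x) = Cadd (Cexpi (x + a)) (Cexpi (x - a)).
Proof. unfold Cmul, RtoC, Cadd, Cexpi; simpl. rewrite cos_plus, sin_plus, cos_minus, sin_minus. f_equal; ring. Qed.

Lemma Csum_two n c1 c2 f : (c1 < n)%nat -> (c2 < n)%nat -> c1 <> c2 ->
  (forall i, (i < n)%nat -> i <> c1 -> i <> c2 -> f i = C0) -> Csum n f = Cadd (f c1) (f c2).
Proof. intros H1 H2 H12 H.
  rewrite (Csum_ext n f (fun i => Cadd (if Nat.eqb i c1 then f c1 else C0) (if Nat.eqb i c2 then f c2 else C0))).
  rewrite Csum_plus, !Csum_delta; auto.
  intros i Hi. destruct (Nat.eqb_spec i c1), (Nat.eqb_spec i c2); subst; try lia.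
  symmetry; apply Cadd_0_r. symmetry; apply Cadd_0_l. rewrite H by auto. symmetry; apply Cadd_0_l. Qed.

Ltac dcase := unfold Delta; repeat (match goal with |- context [Nat.eqb ?x ?y] => destruct (Nat.eqb_spec x y) end); simpl; try lia; try reflexivity.

Lemma r_alpha r th k : (0 < r)%nat -> INR r * alpha r th k = th + 2 * PI * INR k.
Proof. intros H. unfold alpha. field. apply not_0_INR; lia. Qed.

Lemma Cexpi_eqk x y k : x = y + 2 * PI * INR k -> Cexpi x = Cexpi y.
Proof. intros ->; apply Cexpi_per. Qed.
Lemma Cexpi_eqk' x y k : y = x + 2 * PI * INR k -> Cexpi x = Cexpi y.
Proof. intros ->; symmetry; apply Cexpi_per. Qed.

Ltac exsolve k := first [apply Cexpi_ext; lra | apply (Cexpi_eqk _ _ k); lra | apply (Cexpi_eqk' _ _ k); lra].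

Lemma eig1_e r th k a : (2 <= r)%nat -> (a < r)%nat ->
  Csum r (fun c => Cmul (Delta r th a c) (ee r th k c)) = Cmul (RtoC (mu r th k)) (ee r th k a).
Proof.
  intros Hr Ha. unfold mu, ee. rewrite mul_cos.
  pose proof (r_alpha r th k ltac:(lia)) as Hra. set (al := alpha r th k) in *.
  destruct (Nat.eqb_spec r 2) as [E2|E2].
  - subst r. destruct a as [|[|a]]; [| |lia].
    + rewrite (Csum_single 2 1); [| lia |]. 2:{ intros i Hi Hi1. assert (i = 0)%nat by lia. subst. dcase. apply Cmul_0_l. }
      replace (Delta 2 th 0 1) with (Cadd C1 (Cexpi (- th))) by dcase.
      rewrite Cmul_add_l, Cmul_1_l, Cexpi_add.
      simpl (INR 1) in *. simpl (INR 0) in *. simpl (INR 2) in Hra.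
      f_equal; exsolve k.
    + rewrite (Csum_single 2 0); [| lia |]. 2:{ intros i Hi Hi1. assert (i = 1)%nat by lia. subst. dcase. apply Cmul_0_l. }
      replace (Delta 2 th 1 0) with (Cadd C1 (Cexpi th)) by dcase.
      rewrite Cmul_add_l, Cmul_1_l, Cexpi_add.
      simpl (INR 1) in *. simpl (INR 0) in *. simpl (INR 2) in Hra.
      rewrite Cadd_comm. f_equal; exsolve k.
  - assert (Hr3 : (3 <= r)%nat) by lia.
    assert (Hm : INR (r - 1) = INR r - 1) by (rewrite minus_INR by lia; auto).
    assert (Hm2 : INR (r - 2) = INR r - 2) by (rewrite minus_INR by lia; simpl; lra).
    destruct (Nat.eqb_spec a 0) as [A0|A0]; [|destruct (Nat.eqb_spec a (r-1)) as [A1|A1]].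
    + subst a. rewrite (Csum_two r 1 (r-1)); try lia.
      2:{ intros i Hi H1 H2. replace (Delta r th 0 i) with C0 by dcase. apply Cmul_0_l. }
      replace (Delta r th 0 1) with C1 by dcase.
      replace (Delta r th 0 (r-1)) with (Cexpi (-th)) by dcase.
      rewrite Cmul_1_l, Cexpi_add, Hm. simpl (INR 1); simpl (INR 0).
      f_equal; exsolve k.
    + subst a. rewrite (Csum_two r (r-2) 0); try lia.
      2:{ intros i Hi H1 H2. replace (Delta r th (r-1) i) with C0 by dcase. apply Cmul_0_l. }
      replace (Delta r th (r-1) (r-2)) with C1 by dcase.
      replace (Delta r th (r-1) 0) with (Cexpi th) by dcase.
      rewrite Cmul_1_l, Cexpi_add, Hm, Hm2. simpl (INR 0).
      rewrite Cadd_comm. f_equal; exsolve k.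
    + rewrite (Csum_two r (a-1) (a+1)); try lia.
      2:{ intros i Hi H1 H2. replace (Delta r th a i) with C0 by dcase. apply Cmul_0_l. }
      replace (Delta r th a (a-1)) with C1 by dcase.
      replace (Delta r th a (a+1)) with C1 by dcase.
      rewrite !Cmul_1_l, minus_INR, plus_INR by lia. simpl (INR 1).
      rewrite Cadd_comm. f_equal; exsolve k.
Qed.

Lemma geom x n : Cmul (Cexpi x) (Csum n (fun a => Cexpi (INR a * x))) =
  Cadd (Csum n (fun a => Cexpi (INR a * x))) (Cadd (Cexpi (INR n * x)) (-1, 0)).
Proof. induction n.
  - simpl. rewrite Rmult_0_l, Cexpi_0. Csolve.
  - simpl Csum. rewrite Cmul_add_r, IHn, Cexpi_add.
    replace (x + INR n * x) with (INR (S n) * x) by (rewrite S_INR; ring).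
    set (A := Csum n _). set (B := Cexpi (INR n * x)). set (D := Cexpi (INR (S n) * x)). Csolve. Qed.

Lemma cos_ne_1 x : 0 < Rabs x < 2 * PI -> cos x <> 1.
Proof. intros H Hc.
  assert (Hx : cos (Rabs x) = 1). { unfold Rabs; destruct (Rcase_abs x); auto. rewrite cos_neg; auto. }
  set (y := Rabs x) in *. assert (sin (y/2) > 0) by (apply sin_gt_0; lra).
  replace y with (2 * (y/2)) in Hx by field. rewrite cos_2a_sin in Hx. nra. Qed.

Lemma geom_zero x n : cos x <> 1 -> Cexpi (INR n * x) = C1 -> Csum n (fun a => Cexpi (INR a * x)) = C0.
Proof. intros Hc H1. pose proof (geom x n) as G. rewrite H1 in G.
  set (S := Csum n _) in *. destruct S as [s1 s2]. unfold Cexpi, Cmul, Cadd, C1, C0 in *; simpl in *.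
  injection G; intros G2 G1.
  assert (Hs : sin x ^ 2 + cos x ^ 2 = 1) by (rewrite <- (sin2_cos2 x); unfold Rsqr; ring).
  assert (Hd : (cos x - 1) ^ 2 + sin x ^ 2 <> 0).
  { intro. assert (cos x - 1 = 0) by nra. lra. }
  assert (F1 : (cos x - 1) * s1 - sin x * s2 = 0) by lra.
  assert (F2 : (cos x - 1) * s2 + sin x * s1 = 0) by lra.
  assert (E1 : ((cos x - 1) ^ 2 + sin x ^ 2) * s1 = 0).
  { replace (((cos x - 1) ^ 2 + sin x ^ 2) * s1) with ((cos x - 1) * ((cos x - 1) * s1 - sin x * s2) + sin x * ((cos x - 1) * s2 + sin x * s1)) by ring. rewrite F1, F2; ring. }
  assert (E2 : ((cos x - 1) ^ 2 + sin x ^ 2) * s2 = 0).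
  { replace (((cos x - 1) ^ 2 + sin x ^ 2) * s2) with ((cos x - 1) * ((cos x - 1) * s2 + sin x * s1) - sin x * ((cos x - 1) * s1 - sin x * s2)) by ring. rewrite F1, F2; ring. }
  apply Rmult_integral in E1; apply Rmult_integral in E2.
  destruct E1, E2; try contradiction. subst; auto. Qed.

Lemma orth_e r th k k' : (0 < r)%nat -> (k < r)%nat -> (k' < r)%nat ->
  Csum r (fun a => Cmul (Cconj (ee r th k a)) (ee r th k' a)) = if Nat.eqb k k' then RtoC (INR r) else C0.
Proof. intros Hr Hk Hk'. unfold ee.
  set (x := alpha r th k' - alpha r th k).
  rewrite (Csum_ext r _ (fun a => Cexpi (INR a * x))).
  2:{ intros i Hi. rewrite Cconj_expi, Cexpi_add. apply Cexpi_ext. unfold x. ring. }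
  assert (Hx : x = 2 * PI * (INR k' - INR k) / INR r) by (unfold x, alpha; field; apply not_0_INR; lia).
  destruct (Nat.eqb_spec k k').
  - subst k'. assert (x = 0) by (rewrite Hx; unfold Rdiv; ring).
    rewrite (Csum_ext r _ (fun _ => C1)). 2:{ intros. rewrite H, Rmult_0_r. apply Cexpi_0. }
    clear. induction r; simpl. Csolve. rewrite IHr. destruct r; simpl; Csolve.
  - apply geom_zero.
    + apply cos_ne_1. pose proof PI_RGT_0.
      assert (0 < INR r) by (apply lt_0_INR; lia).
      assert (INR k < INR r) by (apply lt_INR; lia). assert (INR k' < INR r) by (apply lt_INR; lia).
      assert (INR k <> INR k') by (intro HH; apply INR_eq in HH; auto).
      pose proof (pos_INR k); pose proof (pos_INR k').
      assert (Hxr : x * INR r = 2 * PI * (INR k' - INR k)) by (rewrite Hx; field; lra).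
      unfold Rabs; destruct (Rcase_abs x); destruct (Rlt_dec (INR k) (INR k')); split; nra.
    + replace (INR r * x) with (- (2 * PI * INR k) + 2 * PI * INR k') by (rewrite Hx; field; apply not_0_INR; lia).
      rewrite Cexpi_per. rewrite <- Cexpi_0. apply (Cexpi_eqk' _ _ k). ring.
Qed.

Definition sc (r : nat) : R := / sqrt (INR r).
Definition uvec (r : nat) (th : R) (k a : nat) : Defs.C := Cmul (RtoC (sc r)) (ee r th k a).
Definition V (r : nat) (th ph : R) (i p : nat) : Defs.C :=
  Cmul (uvec r th (i / r) (p / r)) (uvec r ph (i mod r) (p mod r)).
Definition eigv (r : nat) (th ph : R) (i : nat) : R := mu r th (i / r) + mu r ph (i mod r).

Lemma eig1_u r th k a : (2 <= r)%nat -> (a < r)%nat ->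
  Csum r (fun c => Cmul (Delta r th a c) (uvec r th k c)) = Cmul (RtoC (mu r th k)) (uvec r th k a).
Proof. intros Hr Ha. unfold uvec.
  rewrite (Csum_ext r _ (fun c => Cmul (RtoC (sc r)) (Cmul (Delta r th a c) (ee r th k c)))).
  2:{ intros. set (A := Delta _ _ _ _). set (B := ee _ _ _ _). Csolve. }
  rewrite Csum_mul_l, eig1_e by auto. set (B := ee _ _ _ _). Csolve. Qed.

Lemma sc_sq r : (0 < r)%nat -> sc r * sc r = / INR r.
Proof. intros H. unfold sc. rewrite <- Rinv_mult. rewrite sqrt_sqrt; auto. apply pos_INR. Qed.

Lemma orth_u r th k k' : (0 < r)%nat -> (k < r)%nat -> (k' < r)%nat ->
  Csum r (fun a => Cmul (Cconj (uvec r th k a)) (uvec r th k' a)) = if Nat.eqb k k' then C1 else C0.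
Proof. intros Hr Hk Hk'. unfold uvec.
  rewrite (Csum_ext r _ (fun a => Cmul (RtoC (sc r * sc r)) (Cmul (Cconj (ee r th k a)) (ee r th k' a)))).
  2:{ intros. set (A := ee _ _ _ _). set (B := ee _ _ _ _). unfold sc. Csolve. }
  rewrite Csum_mul_l, orth_e by auto. rewrite sc_sq by auto.
  assert (INR r <> 0) by (apply not_0_INR; lia).
  destruct (Nat.eqb k k'); unfold Cmul, RtoC, C1, C0; simpl; f_equal; field; auto. Qed.

Lemma V_cd r th ph i c d : (d < r)%nat -> V r th ph i (c * r + d) = Cmul (uvec r th (i / r) c) (uvec r ph (i mod r) d).
Proof. intros H. unfold V. destruct (divmod_eq r c d H) as [-> ->]. auto. Qed.

Lemma eig2 r th ph i p : (2 <= r)%nat -> (p < r * r)%nat ->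
  matvec (r * r) (DeltaGamma r th ph) (V r th ph i) p = Cmul (RtoC (eigv r th ph i)) (V r th ph i p).
Proof. intros Hr Hp. unfold matvec. rewrite Csum_prod.
  assert (Ha : (p / r < r)%nat) by (apply Nat.Div0.div_lt_upper_bound; lia).
  assert (Hb : (p mod r < r)%nat) by (apply Nat.mod_upper_bound; lia).
  set (a := (p / r)%nat) in *. set (b := (p mod r)%nat) in *.
  set (k := (i / r)%nat). set (l := (i mod r)%nat).
  rewrite (Csum_ext r _ (fun c => Cadd
      (Csum r (fun d => Cmul (if Nat.eqb b d then Delta r th a c else C0) (Cmul (uvec r th k c) (uvec r ph l d))))
      (Csum r (fun d => Cmul (if Nat.eqb a c then Delta r ph b d else C0) (Cmul (uvec r th k c) (uvec r ph l d)))))).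
  2:{ intros c Hc. rewrite <- Csum_plus. apply Csum_ext. intros d Hd. rewrite V_cd by auto.
      unfold DeltaGamma. destruct (divmod_eq r c d Hd) as [-> ->]. fold a b. apply Cmul_add_l. }
  rewrite Csum_plus.
  rewrite (Csum_ext r (fun c => Csum r _) (fun c => Cmul (Cmul (Delta r th a c) (uvec r th k c)) (uvec r ph l b))).
  2:{ intros c Hc. rewrite (Csum_single r b) by (solve [auto] || (intros d Hd Hdb; destruct (Nat.eqb_spec b d); [lia| apply Cmul_0_l])).
      rewrite Nat.eqb_refl. set (A := Delta _ _ _ _). set (B := uvec _ _ _ _). set (D := uvec _ _ _ _). Csolve. }
  rewrite Csum_mul_r, eig1_u by auto.
  rewrite (Csum_single r a) by (solve [auto] || (intros c Hc Hca; apply Csum_zero; intros d Hd; destruct (Nat.eqb_spec a c); [lia| apply Cmul_0_l])).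
  rewrite Nat.eqb_refl.
  rewrite (Csum_ext r _ (fun d => Cmul (uvec r th k a) (Cmul (Delta r ph b d) (uvec r ph l d)))).
  2:{ intros. set (A := Delta _ _ _ _). set (B := uvec _ _ _ _). set (D := uvec _ _ _ _). Csolve. }
  rewrite Csum_mul_l, eig1_u by auto.
  unfold V, eigv. fold a b k l.
  set (B := uvec _ _ _ _). set (D := uvec _ _ _ _). Csolve. Qed.

Lemma orth2 r th ph i j : (2 <= r)%nat -> (i < r * r)%nat -> (j < r * r)%nat ->
  cinner (r * r) (V r th ph i) (V r th ph j) = if Nat.eqb i j then C1 else C0.
Proof. intros Hr Hi Hj. unfold cinner. rewrite Csum_prod.
  rewrite (Csum_ext r _ (fun a => Csum r (fun b =>
     Cmul (Cmul (Cconj (uvec r th (i / r) a)) (uvec r th (j / r) a))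
          (Cmul (Cconj (uvec r ph (i mod r) b)) (uvec r ph (j mod r) b))))).
  2:{ intros a Ha. apply Csum_ext. intros b Hb. rewrite !V_cd by auto.
      set (A := uvec _ _ _ _). set (B := uvec _ _ _ _). set (D := uvec _ _ _ _). set (F := uvec _ _ _ _). Csolve. }
  rewrite Csum_prod2.
  assert (forall x, x < r * r -> x / r < r)%nat by (intros; apply Nat.Div0.div_lt_upper_bound; lia).
  assert (forall x, x mod r < r)%nat by (intros; apply Nat.mod_upper_bound; lia).
  rewrite !orth_u by (auto; lia).
  destruct (Nat.eqb_spec i j).
  - subst. rewrite !Nat.eqb_refl. apply Cmul_1_l.
  - destruct (Nat.eqb_spec (i / r) (j / r)), (Nat.eqb_spec (i mod r) (j mod r)); try (rewrite ?Cmul_0_l, ?Cmul_0_r; auto).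
    exfalso. apply n. rewrite (Nat.div_mod_eq i r), (Nat.div_mod_eq j r). lia. Qed.

Module RNOrd <: TotalLeBool'.
  Definition t := (R * nat)%type.
  Definition leb (x y : t) : bool := if Rle_dec (fst x) (fst y) then true else false.
  Lemma leb_total : forall x y : t, leb x y = true \/ leb y x = true.
  Proof. intros x y. unfold leb. destruct (Rle_dec (fst x) (fst y)); auto.
    destruct (Rle_dec (fst y) (fst x)); auto. lra. Qed.
End RNOrd.
Module RNSort := Sort RNOrd.

Lemma sorted_fst l : Sorted (fun x y => is_true (RNOrd.leb x y)) l -> Sorted Rle (map fst l).
Proof. induction 1; simpl; constructor; auto.
  destruct H0; simpl; constructor. unfold RNOrd.leb, is_true in H0. destruct (Rle_dec (fst a) (fst b)); auto; discriminate. Qed.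

Definition slist (r : nat) (th ph : R) : list (R * nat) :=
  RNSort.sort (map (fun i => (eigv r th ph i, i)) (seq 0 (r * r))).

Lemma slist_perm r th ph : Permutation (map (fun i => (eigv r th ph i, i)) (seq 0 (r * r))) (slist r th ph).
Proof. apply RNSort.Permuted_sort. Qed.

Lemma spectrum_slist r th ph : (2 <= r)%nat -> spectrum (r * r) (DeltaGamma r th ph) (map fst (slist r th ph)).
Proof. intros Hr. pose proof (slist_perm r th ph) as HP. set (ls := slist r th ph) in *.
  assert (Hlen : length ls = (r * r)%nat) by (rewrite <- (Permutation_length HP), length_map, length_seq; auto).
  assert (Hin : forall x, In x ls -> (snd x < r * r)%nat /\ fst x = eigv r th ph (snd x)).
  { intros x Hx. apply (Permutation_in _ (Permutation_sym HP)) in Hx. apply in_map_iff in Hx.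
    destruct Hx as [i [<- Hi]]. apply in_seq in Hi. simpl. split; auto; lia. }
  assert (Hnd : NoDup (map snd ls)).
  { apply (Permutation_NoDup (Permutation_map snd HP)). rewrite map_map. simpl. rewrite map_id. apply seq_NoDup. }
  split. rewrite length_map; auto.
  exists (fun i => V r th ph (snd (nth i ls (0, 0%nat)))). split.
  - intros i j Hi Hj. rewrite orth2 by (auto; apply Hin; apply nth_In; lia).
    destruct (Nat.eqb_spec i j) as [Eij|Nij], (Nat.eqb_spec (snd (nth i ls (0, 0%nat))) (snd (nth j ls (0, 0%nat)))) as [Es|Ns]; subst; auto; try (exfalso; congruence).
    exfalso. apply Nij. rewrite NoDup_nth in Hnd. apply (Hnd i j); rewrite ?length_map; try lia.
    rewrite !(map_nth snd ls (0, 0%nat)); auto.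
  - intros i k Hi Hk. rewrite eig2 by auto. f_equal. f_equal.
    replace 0 with (fst (0, 0%nat)) by auto. rewrite map_nth.
    symmetry; apply Hin. apply nth_In; lia. Qed.

Lemma sorted_slist r th ph : Sorted Rle (map fst (slist r th ph)).
Proof. apply sorted_fst, RNSort.Sorted_sort. Qed.

Fixpoint cnt (p : R -> bool) (l : list R) : nat :=
  match l with nil => 0%nat | x :: l' => ((if p x then 1 else 0) + cnt p l')%nat end.
Definition ltb (y x : R) : bool := if Rlt_dec x y then true else false.
Definition leb (y x : R) : bool := if Rle_dec x y then true else false.

Lemma cnt_perm p l l' : Permutation l l' -> cnt p l = cnt p l'.
Proof. induction 1; simpl; lia. Qed.
Lemma cnt_app p l l' : cnt p (l ++ l') = (cnt p l + cnt p l')%nat.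
Proof. induction l; simpl; lia. Qed.

Lemma order_stat l y j : StronglySorted Rle l -> (cnt (ltb y) l <= j < cnt (leb y) l)%nat -> nth j l 0 = y.
Proof. revert j. induction l as [|x l IH]; intros j HS Hj; simpl in *. lia.
  inversion HS as [|? ? HS' HF]; subst. rewrite Forall_forall in HF.
  unfold ltb at 1 in Hj. unfold leb at 1 in Hj. destruct (Rlt_dec x y).
  - destruct (Rle_dec x y); [|lra]. destruct j; [lia|]. apply IH; auto. lia.
  - assert (H0 : cnt (ltb y) l = 0%nat).
    { clear -HF n. induction l; simpl; auto. unfold ltb at 1. destruct (Rlt_dec a y).
      exfalso; pose proof (HF a (or_introl eq_refl)); lra. apply IHl. intros; apply HF; simpl; auto. }
    destruct (Rle_dec x y).
    + assert (x = y) by lra. subst. destruct j; auto. apply IH; auto. lia.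
    + assert (H1 : cnt (leb y) l = 0%nat).
      { clear -HF n0. induction l; simpl; auto. unfold leb at 1. destruct (Rle_dec a y).
        exfalso; pose proof (HF a (or_introl eq_refl)); lra. apply IHl. intros; apply HF; simpl; auto. }
      lia. Qed.

Definition ev_list r th ph := map (eigv r th ph) (seq 0 (r * r)).
Lemma cnt_slist p r th ph : cnt p (map fst (slist r th ph)) = cnt p (ev_list r th ph).
Proof. symmetry. apply cnt_perm. pose proof (Permutation_map fst (slist_perm r th ph)) as H.
  rewrite map_map in H. simpl in H. exact H. Qed.

Lemma band_of r j th ph y : (2 <= r)%nat -> 0 <= th <= PI -> 0 <= ph <= PI ->
  (cnt (ltb y) (ev_list r th ph) <= j < cnt (leb y) (ev_list r th ph))%nat -> band r j y.
Proof. intros Hr Ht Hp Hc. exists th, ph. split; auto. split; auto.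
  exists (map fst (slist r th ph)). split. apply sorted_slist. split. apply spectrum_slist; auto.
  apply order_stat. apply Sorted_StronglySorted. intros a b c; lra. apply sorted_slist.
  rewrite !cnt_slist; auto. Qed.

Lemma cos_cont x eps : 0 < eps -> exists d, 0 < d /\ forall y, Rabs (y - x) < d -> Rabs (cos y - cos x) < eps.
Proof. intros He. pose proof (continuity_cos x) as H.
  unfold continuity_pt, continue_in, limit1_in, limit_in in H.
  destruct (H eps He) as [d [Hd Hy]]. exists d; split; auto. intros y Hyx.
  destruct (Req_dec y x). subst; rewrite Rminus_diag, Rabs_R0; auto.
  apply Hy. split. unfold D_x, no_cond. split; auto. simpl. unfold R_dist. auto. Qed.

Lemma cnt_lt_le y l : (cnt (ltb y) l <= cnt (leb y) l)%nat.
Proof. induction l; simpl; auto. unfold ltb at 1, leb at 1.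
  destruct (Rlt_dec a y), (Rle_dec a y); try lra; lia. Qed.

Section Semi.
Variable G : R -> nat -> R.
Hypothesis HC : forall i t0 eps, 0 < eps -> exists d, 0 < d /\ forall t, Rabs (t - t0) < d -> Rabs (G t i - G t0 i) < eps.

Lemma semi (s : list nat) y t0 : exists d, 0 < d /\ forall t, Rabs (t - t0) < d ->
  (cnt (ltb y) (map (G t0) s) <= cnt (ltb y) (map (G t) s) /\ cnt (leb y) (map (G t) s) <= cnt (leb y) (map (G t0) s))%nat.
Proof. induction s as [|i s IH].
  - exists 1; split; [lra|]. simpl; lia.
  - destruct IH as [d1 [Hd1 H1]].
    assert (exists d2, 0 < d2 /\ forall t, Rabs (t - t0) < d2 -> (G t0 i < y -> G t i < y) /\ (G t0 i > y -> G t i > y)) as [d2 [Hd2 H2]].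
    { destruct (Rtotal_order (G t0 i) y) as [Hl|[He|Hg]].
      - destruct (HC i t0 (y - G t0 i)) as [d [Hd Hdd]]; [lra|]. exists d; split; auto. intros t Ht.
        specialize (Hdd t Ht). apply Rabs_def2 in Hdd. split; intros; lra.
      - exists 1; split; [lra|]. intros; split; intros; lra.
      - destruct (HC i t0 (G t0 i - y)) as [d [Hd Hdd]]; [lra|]. exists d; split; auto. intros t Ht.
        specialize (Hdd t Ht). apply Rabs_def2 in Hdd. split; intros; lra. }
    exists (Rmin d1 d2). split. apply Rmin_glb_lt; auto. intros t Ht.
    assert (Ht1 : Rabs (t - t0) < d1) by (eapply Rlt_le_trans; [apply Ht| apply Rmin_l]).
    assert (Ht2 : Rabs (t - t0) < d2) by (eapply Rlt_le_trans; [apply Ht| apply Rmin_r]).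
    destruct (H1 t Ht1) as [A B]. destruct (H2 t Ht2) as [C D]. simpl.
    unfold ltb at 1 3, leb at 1 3.
    destruct (Rlt_dec (G t0 i) y), (Rlt_dec (G t i) y), (Rle_dec (G t i) y), (Rle_dec (G t0 i) y);
      try lia; exfalso; try lra.
Qed.

Lemma ivt (s : list nat) y j a b : a <= b ->
  (cnt (leb y) (map (G a) s) <= j)%nat -> (j < cnt (ltb y) (map (G b) s))%nat ->
  exists t, a <= t <= b /\ (cnt (ltb y) (map (G t) s) <= j < cnt (leb y) (map (G t) s))%nat.
Proof. intros Hab Ha Hb.
  set (E := fun t => a <= t <= b /\ (cnt (leb y) (map (G t) s) <= j)%nat).
  destruct (completeness E) as [m [Hub Hlub]].
  { exists b. intros x [Hx _]. lra. }
  { exists a. split; auto. lra. }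
  assert (Ham : a <= m) by (apply Hub; split; auto; lra).
  assert (Hmb : m <= b) by (apply Hlub; intros x [Hx _]; lra).
  exists m. split; [lra|]. split.
  - destruct (Nat.le_gt_cases (cnt (ltb y) (map (G m) s)) j) as [|Hgt]; auto. exfalso.
    destruct (semi s y m) as [d [Hd Hs]].
    assert (m <= m - d / 2). { apply Hlub. intros x [Hx Hxj]. destruct (Rle_dec x (m - d/2)); auto.
      assert (x <= m) by (apply Hub; split; auto).
      destruct (Hs x) as [A _]. rewrite Rabs_left1 by lra. lra.
      pose proof (cnt_lt_le y (map (G x) s)). lia. }
    lra.
  - destruct (Nat.le_gt_cases (cnt (leb y) (map (G m) s)) j) as [Hle|]; auto. exfalso.
    destruct (Req_dec m b) as [->|Hmb'].
    + pose proof (cnt_lt_le y (map (G b) s)). lia.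
    + destruct (semi s y m) as [d [Hd Hs]].
      set (t := Rmin (m + d / 2) b).
      assert (Ht1 : m < t) by (unfold t; apply Rmin_glb_lt; lra).
      assert (Ht2 : t <= m + d / 2) by apply Rmin_l. assert (Ht3 : t <= b) by apply Rmin_r.
      assert (E t). { split; [lra|]. destruct (Hs t) as [_ B]. rewrite Rabs_pos_eq by lra. lra. lia. }
      specialize (Hub t H). lra.
Qed.
End Semi.

Fixpoint nsum (n : nat) (f : nat -> nat) : nat :=
  match n with O => O | S m => (nsum m f + f m)%nat end.
Definition b2n (b : bool) : nat := if b then 1%nat else 0%nat.

Lemma nsum_ext n f g : (forall i, (i < n)%nat -> f i = g i) -> nsum n f = nsum n g.
Proof. induction n; intros H; simpl; auto. rewrite IHn, H; auto. Qed.
Lemma nsum_add a b f : nsum (a + b) f = (nsum a f + nsum b (fun i => f (a + i)))%nat.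
Proof. induction b; simpl. rewrite Nat.add_0_r; lia. rewrite Nat.add_succ_r; simpl. rewrite IHb; lia. Qed.
Lemma nsum_shift n f : nsum (S n) f = (f 0 + nsum n (fun i => f (S i)))%nat.
Proof. induction n; simpl in *. lia. rewrite IHn. lia. Qed.
Lemma nsum_rev n f : nsum n f = nsum n (fun i => f (n - 1 - i)%nat).
Proof. induction n; auto. rewrite (nsum_shift n (fun i => f (S n - 1 - i)%nat)). simpl nsum at 1. rewrite IHn.
  replace (S n - 1 - 0)%nat with n by lia. rewrite (nsum_ext n (fun i => f (S n - 1 - S i)%nat) (fun i => f (n - 1 - i)%nat)); [lia|].
  intros; f_equal; lia. Qed.
Lemma nsum_plus n f g : nsum n (fun i => f i + g i)%nat = (nsum n f + nsum n g)%nat.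
Proof. induction n; simpl; auto. rewrite IHn; lia. Qed.
Lemma nsum_prod r f : nsum (r * r) f = nsum r (fun k => nsum r (fun l => f (k * r + l)%nat)).
Proof. assert (forall m, nsum (m * r) f = nsum m (fun k => nsum r (fun l => f (k * r + l)%nat))).
  { induction m; simpl; auto. replace (r + m * r)%nat with (m * r + r)%nat by lia.
    rewrite nsum_add, IHm. auto. }
  apply H. Qed.
Lemma nsum_le n f c : (forall i, (i < n)%nat -> f i <= c)%nat -> (nsum n f <= n * c)%nat.
Proof. induction n; intros H; simpl; auto. pose proof (IHn (fun i Hi => H i ltac:(lia))). pose proof (H n ltac:(lia)). lia. Qed.
Lemma nsum_const n f c : (forall i, (i < n)%nat -> f i = c) -> nsum n f = (n * c)%nat.
Proof. induction n; intros H; simpl; auto. rewrite IHn, H by auto. lia. Qed.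

Lemma cnt_nsum p g n : cnt p (map g (seq 0 n)) = nsum n (fun i => b2n (p (g i))).
Proof. induction n; auto. rewrite seq_S, map_app, cnt_app, IHn. simpl. unfold b2n. lia. Qed.

Lemma par_pair m h : (forall k, (k < 2 * m)%nat -> h k = h (2 * m - 1 - k)%nat) ->
  exists q, nsum (2 * m) h = (2 * q)%nat.
Proof. intros H. exists (nsum m h). replace (2 * m)%nat with (m + m)%nat by lia. rewrite nsum_add.
  rewrite (nsum_ext m (fun i => h (m + i)%nat) (fun i => h (m - 1 - i)%nat)).
  rewrite <- nsum_rev. lia. intros i Hi. rewrite H by lia. f_equal; lia. Qed.

Lemma par_fix m h : (1 <= m)%nat -> (forall l, (1 <= l < 2 * m)%nat -> h l = h (2 * m - l)%nat) ->
  exists q, nsum (2 * m) h = (h 0 + h m + 2 * q)%nat.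
Proof. intros Hm H. destruct m as [|m']; [lia|]. exists (nsum m' (fun i => h (S i))).
  replace (2 * S m')%nat with (S m' + S m')%nat by lia. rewrite nsum_add.
  rewrite nsum_shift. rewrite (nsum_shift m' (fun i => h (S m' + i)%nat)).
  rewrite (nsum_ext m' (fun i => h (S m' + S i)%nat) (fun i => h (S (m' - 1 - i))%nat)).
  rewrite <- (nsum_rev m' (fun i => h (S i))). rewrite Nat.add_0_r. lia.
  intros i Hi. rewrite H by lia. f_equal; lia. Qed.

Lemma cos_2PI_minus x : cos (2 * PI - x) = cos x.
Proof. rewrite cos_minus, cos_2PI, sin_2PI. ring. Qed.

Lemma mu_bound r t k : -2 <= mu r t k <= 2.
Proof. unfold mu. pose proof (COS_bound (alpha r t k)). lra. Qed.

Lemma INR_r_pos r : (0 < r)%nat -> 0 < INR r.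
Proof. intros; apply lt_0_INR; auto. Qed.

Lemma mu0_sym r l : (0 < r)%nat -> (l <= r)%nat -> mu r 0 (r - l) = mu r 0 l.
Proof. intros Hr Hl. unfold mu, alpha. rewrite minus_INR by auto. pose proof (INR_r_pos r Hr).
  rewrite <- cos_2PI_minus. f_equal. f_equal. field. lra. Qed.

Lemma muPI_sym r k : (0 < r)%nat -> (k < r)%nat -> mu r PI (r - 1 - k) = mu r PI k.
Proof. intros Hr Hk. unfold mu, alpha. rewrite !minus_INR by lia. simpl (INR 1). pose proof (INR_r_pos r Hr).
  rewrite <- cos_2PI_minus. f_equal. f_equal. field. lra. Qed.

Lemma mu0_0 r : (0 < r)%nat -> mu r 0 0 = 2.
Proof. intros. unfold mu, alpha. simpl INR. replace ((0 + 2 * PI * 0) / INR r) with 0. rewrite cos_0; ring.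
  field. pose proof (INR_r_pos r H); lra. Qed.

Lemma mu0_half m : (0 < m)%nat -> mu (2 * m) 0 m = -2.
Proof. intros. unfold mu, alpha.
  replace ((0 + 2 * PI * INR m) / INR (2 * m)) with PI. rewrite cos_PI; ring.
  rewrite mult_INR. simpl (INR 2). field. pose proof (INR_r_pos m H); lra. Qed.

Lemma ltb_true y x : x < y -> ltb y x = true.
Proof. unfold ltb; destruct (Rlt_dec x y); auto; lra. Qed.
Lemma ltb_false y x : ~ x < y -> ltb y x = false.
Proof. unfold ltb; destruct (Rlt_dec x y); auto; lra. Qed.

Lemma inner_par m t k y : (1 <= m)%nat ->
  exists q, nsum (2 * m) (fun l => b2n (ltb y (mu (2 * m) t k + mu (2 * m) 0 l))) =
    (b2n (ltb (y - 2) (mu (2 * m) t k)) + b2n (ltb (y + 2) (mu (2 * m) t k)) + 2 * q)%nat.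
Proof. intros Hm. destruct (par_fix m (fun l => b2n (ltb y (mu (2 * m) t k + mu (2 * m) 0 l)))) as [q Hq]; auto.
  - intros l Hl. rewrite mu0_sym by lia. auto.
  - exists q. rewrite Hq. rewrite mu0_0, mu0_half by lia. unfold ltb.
    destruct (Rlt_dec (mu (2 * m) t k + 2) y), (Rlt_dec (mu (2 * m) t k) (y - 2)); try lra;
    destruct (Rlt_dec (mu (2 * m) t k + -2) y), (Rlt_dec (mu (2 * m) t k) (y + 2)); try lra; auto. Qed.

Lemma nsum_par n A B : (forall k, (k < n)%nat -> exists q, A k = (B k + 2 * q)%nat) ->
  exists q, nsum n A = (nsum n B + 2 * q)%nat.
Proof. induction n; intros H. exists 0%nat; auto.
  destruct IHn as [q1 H1]. intros; apply H; lia. destruct (H n) as [q2 H2]. lia.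
  exists (q1 + q2)%nat. simpl. lia. Qed.

Lemma count_par m t y : (1 <= m)%nat ->
  exists q, cnt (ltb y) (ev_list (2 * m) t 0) =
    (nsum (2 * m) (fun k => b2n (ltb (y - 2) (mu (2 * m) t k))) + nsum (2 * m) (fun k => b2n (ltb (y + 2) (mu (2 * m) t k))) + 2 * q)%nat.
Proof. intros Hm. unfold ev_list. rewrite cnt_nsum, nsum_prod, <- nsum_plus.
  apply nsum_par. intros k Hk. destruct (inner_par m t k y Hm) as [q Hq]. exists q. rewrite <- Hq. apply nsum_ext.
  intros l Hl. unfold eigv. destruct (divmod_eq (2 * m) k l Hl) as [-> ->]. auto. Qed.

Lemma par0 m z : (1 <= m)%nat -> -2 < z < 2 ->
  exists q, nsum (2 * m) (fun k => b2n (ltb z (mu (2 * m) 0 k))) = (1 + 2 * q)%nat.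
Proof. intros Hm Hz. destruct (par_fix m (fun k => b2n (ltb z (mu (2 * m) 0 k)))) as [q Hq]; auto.
  - intros l Hl. rewrite mu0_sym by lia. auto.
  - exists q. rewrite Hq, mu0_0, mu0_half by lia. rewrite ltb_false, ltb_true by lra. auto. Qed.

Lemma parPI m z : (1 <= m)%nat ->
  exists q, nsum (2 * m) (fun k => b2n (ltb z (mu (2 * m) PI k))) = (2 * q)%nat.
Proof. intros Hm. apply par_pair. intros k Hk. rewrite muPI_sym by lia. auto. Qed.

Lemma sum_all m t z : 2 < z -> nsum (2 * m) (fun k => b2n (ltb z (mu (2 * m) t k))) = (2 * m)%nat.
Proof. intros Hz. rewrite (nsum_const _ _ 1%nat). lia. intros. rewrite ltb_true; auto. pose proof (mu_bound (2*m) t i). lra. Qed.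
Lemma sum_none m t z : z < -2 -> nsum (2 * m) (fun k => b2n (ltb z (mu (2 * m) t k))) = 0%nat.
Proof. intros Hz. rewrite (nsum_const _ _ 0%nat). lia. intros. rewrite ltb_false; auto. pose proof (mu_bound (2*m) t i). lra. Qed.

Lemma corner_par m (E : R) : (1 <= m)%nat -> (-4 < E < 4) -> (E <> 0) ->
  (exists q, cnt (ltb E) (ev_list (2 * m) 0 0) = (1 + 2 * q)%nat) /\ (exists q, cnt (ltb E) (ev_list (2 * m) PI 0) = (2 * q)%nat).
Proof. intros Hm HE H0. destruct (count_par m 0 E Hm) as [q1 H1]. destruct (count_par m PI E Hm) as [q2 H2].
  destruct (Rlt_dec 0 E).
  - rewrite (sum_all m 0 (E + 2)) in H1 by lra. rewrite (sum_all m PI (E + 2)) in H2 by lra. destruct (par0 m (E - 2) Hm ltac:(lra)) as [q3 H3].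
    destruct (parPI m (E - 2) Hm) as [q4 H4]. split.
    exists (q1 + q3 + m)%nat. lia. exists (q2 + q4 + m)%nat. lia.
  - rewrite (sum_none m 0 (E - 2)) in H1 by lra. rewrite (sum_none m PI (E - 2)) in H2 by lra. destruct (par0 m (E + 2) Hm ltac:(lra)) as [q3 H3].
    destruct (parPI m (E + 2) Hm) as [q4 H4]. split.
    exists (q1 + q3)%nat. lia. exists (q2 + q4)%nat. lia. Qed.

Lemma cos_refl r n : (0 < r)%nat -> (n <= 2 * r)%nat ->
  cos (PI * INR (2 * r - n) / INR r) = cos (PI * INR n / INR r).
Proof. intros Hr Hn. rewrite minus_INR by auto. rewrite mult_INR. simpl (INR 2).
  pose proof (INR_r_pos r Hr). rewrite <- cos_2PI_minus. f_equal. field. lra. Qed.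

Lemma Cr_of r n x : (0 < r)%nat -> (n <= 2 * r)%nat -> x = 2 * cos (PI * INR n / INR r) -> in_Cr r x.
Proof. intros Hr Hn Hx. destruct (Nat.le_gt_cases n r).
  - exists n. split; auto.
  - exists (2 * r - n)%nat. split. lia. rewrite cos_refl by auto. auto. Qed.

Lemma mu0_Cr r k : (0 < r)%nat -> (k < r)%nat -> in_Cr r (mu r 0 k).
Proof. intros Hr Hk. apply (Cr_of r (2 * k)). auto. lia. unfold mu, alpha. f_equal. f_equal.
  rewrite mult_INR. simpl (INR 2). pose proof (INR_r_pos r Hr). field. lra. Qed.

Lemma muPI_Cr r k : (0 < r)%nat -> (k < r)%nat -> in_Cr r (mu r PI k).
Proof. intros Hr Hk. apply (Cr_of r (2 * k + 1)). auto. lia. unfold mu, alpha. f_equal. f_equal.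
  rewrite plus_INR, mult_INR. simpl (INR 2). simpl (INR 1). pose proof (INR_r_pos r Hr). field. lra. Qed.

Lemma two_Cr r : (0 < r)%nat -> in_Cr r 2.
Proof. intros Hr. exists 0%nat. split. lia. simpl INR. replace (PI * 0 / INR r) with 0. rewrite cos_0; ring.
  pose proof (INR_r_pos r Hr). field. lra. Qed.
Lemma mtwo_Cr r : (0 < r)%nat -> in_Cr r (-2).
Proof. intros Hr. exists r. split. lia. replace (PI * INR r / INR r) with PI. rewrite cos_PI; ring.
  pose proof (INR_r_pos r Hr). field. lra. Qed.

Lemma eig_cont r : (0 < r)%nat -> forall i t0 eps, 0 < eps -> exists d, 0 < d /\
  forall t, Rabs (t - t0) < d -> Rabs (eigv r t 0 i - eigv r t0 0 i) < eps.
Proof. intros Hr i t0 eps He. destruct (cos_cont (alpha r t0 (i / r)) (eps / 2)) as [d [Hd H]]; [lra|].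
  pose proof (INR_r_pos r Hr).
  exists (d * INR r). split. apply Rmult_lt_0_compat; auto. intros t Ht.
  unfold eigv, mu. replace (2 * cos (alpha r t (i / r)) + 2 * cos (alpha r 0 (i mod r)) -
     (2 * cos (alpha r t0 (i / r)) + 2 * cos (alpha r 0 (i mod r)))) with
     (2 * (cos (alpha r t (i / r)) - cos (alpha r t0 (i / r)))) by ring.
  rewrite Rabs_mult, Rabs_pos_eq by lra.
  enough (Rabs (cos (alpha r t (i / r)) - cos (alpha r t0 (i / r))) < eps / 2) by lra.
  apply H. replace (alpha r t (i / r) - alpha r t0 (i / r)) with ((t - t0) / INR r) by (unfold alpha; field; lra).
  unfold Rdiv. rewrite Rabs_mult, (Rabs_pos_eq (/ INR r)). 2:{ left; apply Rinv_0_lt_compat; lra. }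
  apply (Rmult_lt_reg_r (INR r)). lra. rewrite Rmult_assoc, Rinv_l by lra. lra. Qed.

Fixpoint mindist (f : nat -> R) (E : R) (s : list nat) : R :=
  match s with nil => 1 | i :: s' => Rmin (Rabs (f i - E)) (mindist f E s') end.

Lemma mindist_pos f E s : (forall i, In i s -> f i <> E) -> 0 < mindist f E s.
Proof. induction s; intros H; simpl. lra. apply Rmin_glb_lt. apply Rabs_pos_lt. intro. apply (H a). left; auto. lra.
  apply IHs. intros; apply H; right; auto. Qed.
Lemma mindist_le f E s i : In i s -> mindist f E s <= Rabs (f i - E).
Proof. induction s; simpl. tauto. intros [->|H]. apply Rmin_l. eapply Rle_trans. apply Rmin_r. auto. Qed.

Lemma cnt_stable f E (s : list nat) eps y : (forall i, In i s -> eps <= Rabs (f i - E)) -> Rabs (y - E) < eps ->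
  cnt (ltb y) (map f s) = cnt (ltb E) (map f s) /\ cnt (leb y) (map f s) = cnt (ltb E) (map f s).
Proof. intros H Hy. induction s as [|i s IH]; simpl; auto.
  destruct IH as [A B]. intros; apply H; right; auto.
  pose proof (H i (or_introl eq_refl)) as Hi. rewrite A, B. unfold ltb, leb.
  apply Rabs_def2 in Hy. unfold Rabs in Hi. destruct (Rcase_abs (f i - E));
  destruct (Rlt_dec (f i) y), (Rlt_dec (f i) E), (Rle_dec (f i) y); split; auto; lra. Qed.

Lemma cnt_len p l : (cnt p l <= length l)%nat.
Proof. induction l; simpl; auto. destruct (p a); lia. Qed.

Theorem proposition3p2 :
  forall (r : nat), (0 < r)%nat -> Nat.Even r ->
  forall E : R, -4 < E < 4 -> ~ in_CGamma r E ->
  exists j : nat, (j < r * r)%nat /\ in_interior (band r j) E.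
Proof.
  intros r Hr [m Hm] E HE HnC. subst r.
  assert (Hm1 : (1 <= m)%nat) by lia.
  set (n := (2 * m)%nat) in *.
  assert (Hn2 : (2 <= n)%nat) by (unfold n; lia).
  set (s := seq 0 (n * n)).
  assert (HE0 : E <> 0).
  { intro H0. apply HnC. exists 2, (-2). split. apply two_Cr; lia. split. apply mtwo_Cr; lia. lra. }
  assert (Hne : forall c i, (c = 0 \/ c = PI) -> In i s -> eigv n c 0 i <> E).
  { intros c i Hc Hi Heq. apply HnC. apply in_seq in Hi.
    assert (Hk : (i / n < n)%nat) by (apply Nat.Div0.div_lt_upper_bound; lia).
    assert (Hl : (i mod n < n)%nat) by (apply Nat.mod_upper_bound; lia).
    exists (mu n c (i / n)), (mu n 0 (i mod n)). split.
    destruct Hc as [->| ->]. apply mu0_Cr; lia. apply muPI_Cr; lia.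
    split. apply mu0_Cr; lia. rewrite <- Heq. auto. }
  set (D0 := mindist (eigv n 0 0) E s). set (DP := mindist (eigv n PI 0) E s).
  assert (HD0 : 0 < D0) by (apply mindist_pos; intros; apply Hne; auto).
  assert (HDP : 0 < DP) by (apply mindist_pos; intros; apply Hne; auto).
  set (eps := Rmin (Rmin D0 DP) (Rmin (Rabs E) (Rmin (4 - E) (4 + E)))).
  assert (Heps : 0 < eps).
  { unfold eps. repeat apply Rmin_glb_lt; try lra. apply Rabs_pos_lt; auto. }
  assert (He1 : eps <= D0) by (unfold eps; eapply Rle_trans; [apply Rmin_l| apply Rmin_l]).
  assert (He2 : eps <= DP) by (unfold eps; eapply Rle_trans; [apply Rmin_l| apply Rmin_r]).
  assert (St0 : forall y, Rabs (y - E) < eps ->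
     cnt (ltb y) (map (eigv n 0 0) s) = cnt (ltb E) (map (eigv n 0 0) s) /\
     cnt (leb y) (map (eigv n 0 0) s) = cnt (ltb E) (map (eigv n 0 0) s)).
  { intros y Hy. apply (cnt_stable _ _ _ eps); auto. intros i Hi. eapply Rle_trans. apply He1. apply mindist_le; auto. }
  assert (StP : forall y, Rabs (y - E) < eps ->
     cnt (ltb y) (map (eigv n PI 0) s) = cnt (ltb E) (map (eigv n PI 0) s) /\
     cnt (leb y) (map (eigv n PI 0) s) = cnt (ltb E) (map (eigv n PI 0) s)).
  { intros y Hy. apply (cnt_stable _ _ _ eps); auto. intros i Hi. eapply Rle_trans. apply He2. apply mindist_le; auto. }
  destruct (corner_par m E Hm1 HE HE0) as [[q0 Hq0] [qP HqP]].
  fold n in Hq0, HqP. unfold ev_list in Hq0, HqP. fold s in Hq0, HqP.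
  set (N0 := cnt (ltb E) (map (eigv n 0 0) s)) in *.
  set (NP := cnt (ltb E) (map (eigv n PI 0) s)) in *.
  assert (HlenN : (N0 <= n * n /\ NP <= n * n)%nat).
  { split; (eapply Nat.le_trans; [apply cnt_len|]); rewrite length_map; unfold s; rewrite length_seq; auto. }
  exists (Nat.min N0 NP). split. lia.
  exists eps. split; auto. intros y Hy.
  destruct (St0 y Hy) as [A0 B0]. destruct (StP y Hy) as [AP BP].
  pose proof (eig_cont n ltac:(lia)) as HC.
  destruct (Nat.lt_ge_cases N0 NP) as [Hlt|Hge].
  - destruct (ivt (fun t i => eigv n t 0 i) HC s y (Nat.min N0 NP) 0 PI) as [t [Ht Hc]].
    + pose proof PI_RGT_0; lra.
    + change (cnt (leb y) (map (eigv n 0 0) s) <= Nat.min N0 NP)%nat. lia.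
    + change (Nat.min N0 NP < cnt (ltb y) (map (eigv n PI 0) s))%nat. lia.
    + apply (band_of n _ t 0); auto; pose proof PI_RGT_0; lra.
  - assert (HC' : forall i t0 eps0, 0 < eps0 -> exists d, 0 < d /\
       forall t, Rabs (t - t0) < d -> Rabs (eigv n (PI - t) 0 i - eigv n (PI - t0) 0 i) < eps0).
    { intros i t0 e0 He0. destruct (HC i (PI - t0) e0 He0) as [d [Hd Hdd]]. exists d. split; auto.
      intros t Ht. apply Hdd. replace (PI - t - (PI - t0)) with (- (t - t0)) by ring. rewrite Rabs_Ropp; auto. }
    destruct (ivt (fun t i => eigv n (PI - t) 0 i) HC' s y (Nat.min N0 NP) 0 PI) as [t [Ht Hc]].
    + pose proof PI_RGT_0; lra.
    + rewrite Rminus_0_r. change (cnt (leb y) (map (eigv n PI 0) s) <= Nat.min N0 NP)%nat. lia.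
    + rewrite Rminus_diag. change (Nat.min N0 NP < cnt (ltb y) (map (eigv n 0 0) s))%nat. lia.
    + apply (band_of n _ (PI - t) 0); auto; pose proof PI_RGT_0; lra.
Qed.
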